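(* Let $p=2$ and $n\geq 1$. The $E_2$-term $E_2^{*,*,*}S(n,n)$ of the May spectral sequence for $S(n,n)$ is isomorphic to the tensor product of $E[h_{s,j}\mid n<s<2n,\ j\in\mathbb{Z}/n]$ and $E[h_{n,j},\rho_{2n}\mid j\in\mathbb{Z}/n]\otimes P[h_{n,n-1}]$, where $\rho_{2n}=\sum_{0\leq j<n}h_{2n,j}$ and $h_{n,j}^2=h_{n,n-1}^2$.
   Context: At $p=2$, $S(n,n)=\mathbb{Z}/2[t_n,t_{n+1},\dots]/(t_s^{2^n}-t_s)$ is the Hopf algebra with coproduct $\Delta(t_s)=1\otimes t_s+\sum_{n\leq i\leq s-n}t_i\otimes t_{s-i}^{2^i}+t_s\otimes1$ for $s\leq 2n-1$ and the same minus $t_{s-n}^{2^{n-1}}\otimes t_{s-n}^{2^{n-1}}$ for $s\geq 2n$. May filtration: $M(t_s^{2^j})=2s-1$ for $n\le s\le 2n-1$, $M(t_s^{2^j})=\max\{2s-1,2M(t_{s-n}^{2^{j+n-1}})+1\}$ for $s\ge 2n$, extended to monomials by $M(t_s^{\sum j_i2^i})=\sum j_iM(t_s^{2^i})$ and additively over distinct $t_s$, and to cobar elements by $M([\alpha_1|\cdots|\alpha_s])=\sum M(\alpha_i)$; the resulting May spectral sequence $E_r^{s,t,M}S(n,n)$ converges to $\mathrm{Ext}_{S(n,n)}(\mathbb{Z}/2,\mathbb{Z}/2)$, and $h_{i,j}$ ($i\ge n$, $j\in\mathbb{Z}/n$) denotes the class in $E_1$ of $[t_i^{2^j}]$. Its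 $E_2$-term is the cohomology of $P[h_{n,j}\mid j\in\mathbb{Z}/n]\otimes E[h_{s,j}\mid n<s\leq 2n,\ j\in\mathbb{Z}/n]$ with the only nontrivial differentials on generators $d_1(h_{2n,j})=h_{n,j-1}^2+h_{n,j}^2$. *)

(* Defs.v *)
From HB Require Import structures.
From mathcomp Require Import all_boot all_order all_algebra.
From mathcomp Require Import mpoly.
Set Implicit Arguments. Unset Strict Implicit. Unset Printing Implicit Defensive.
Import GRing.Theory.
Local Open Scope ring_scope.

Notation F2poly k := {mpoly 'F_2[k]}.

(* The i-th variable of F_2[X_0..X_{k-1}] (0 if i >= k; never used out of range). *)
Definition Xv (k i : nat) : F2poly k :=
  match (insub i : option 'I_k) with Some o => 'X_o | None => 0 end.

Definition in_ideal (k : nat) (gs : seq (F2poly k)) (a : F2poly k) : Prop :=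
  exists cs : seq (F2poly k), size cs = size gs /\
    a = \sum_(i < size gs) cs`_i * gs`_i.

(* Since the characteristic is 2, the exterior algebra is F_2[h]/(h^2); we model
   E_1 as the polynomial ring in the (n+1)*n variables h_{n+o,j}
   (0 <= o <= n, 0 <= j < n; variable index o*n + j) modulo the ideal IA
   generated by the squares h_{n+o,j}^2 with 1 <= o <= n. *)
Definition kA (n : nat) := (n.+1 * n)%N.

Definition hA (n o j : nat) : F2poly (kA n) := Xv (kA n) (o * n + j).

Definition IA_gens (n : nat) : seq (F2poly (kA n)) :=
  [seq hA n o j ^+ 2 | o <- iota 1 n, j <- iota 0 n].

Definition inIA (n : nat) (a : F2poly (kA n)) : Prop := in_ideal (IA_gens n) a.

(* The d_1-differential: the derivation with d_1(h_{2n,j}) = h_{n,j-1}^2 + h_{n,j}^2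
   (j-1 taken in Z/n) and d_1 = 0 on all other generators.  The variable h_{2n,j}
   has index n*n + j. It preserves the ideal IA, hence descends to E_1. *)
Definition dA (n : nat) (p : F2poly (kA n)) : F2poly (kA n) :=
  \sum_(i < kA n | (n * n <= i)%N)
     mderiv i p * (hA n 0 ((i - n * n + n).-1 %% n) ^+ 2 + hA n 0 (i - n * n) ^+ 2).

Definition cycleA (n : nat) (a : F2poly (kA n)) : Prop := inIA (dA a).
Definition boundaryA (n : nat) (a : F2poly (kA n)) : Prop :=
  exists b : F2poly (kA n), inIA (a - dA b).

Definition rhoA (n : nat) : F2poly (kA n) := \sum_(j < n) hA n n j.

(* ---------------- The target algebra C ----------------
   C = E[h_{s,j} | n < s < 2n, j in Z/n] (x) E[h_{n,j}, rho | j in Z/n] (x) P[h_{n,n-1}]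
   with the relations h_{n,j}^2 = h_{n,n-1}^2.
   Modelled as the polynomial ring in n*n + 1 variables: c_{n+o,j} (0 <= o < n,
   0 <= j < n, index o*n + j) and r (index n*n), modulo the ideal JC generated by
   c_{n+o,j}^2 (1 <= o < n), r^2 and c_{n,j}^2 - c_{n,n-1}^2. *)
Definition kC (n : nat) := (n * n).+1.

Definition hC (n o j : nat) : F2poly (kC n) := Xv (kC n) (o * n + j).
Definition rhoC (n : nat) : F2poly (kC n) := Xv (kC n) (n * n).

Definition JC_gens (n : nat) : seq (F2poly (kC n)) :=
  [seq hC n o j ^+ 2 | o <- iota 1 n.-1, j <- iota 0 n]
  ++ [:: rhoC n ^+ 2]
  ++ [seq hC n 0 j ^+ 2 - hC n 0 n.-1 ^+ 2 | j <- iota 0 n].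

Definition inJC (n : nat) (c : F2poly (kC n)) : Prop := in_ideal (JC_gens n) c.

Definition psi_images (n : nat) : (kC n).-tuple (F2poly (kA n)) :=
  [tuple (if (i < n * n)%N then hA n (i %/ n) (i %% n) else rhoA n) | i < kC n].

Definition psi (n : nat) (c : F2poly (kC n)) : F2poly (kA n) :=
  comp_mpoly (psi_images n) c.

(* Main.v *)
Require Import Defs.
From HB Require Import structures.
From mathcomp Require Import all_boot all_order all_algebra.
From mathcomp Require Import mpoly.
From mathcomp Require Import ring zify.
Import GRing.Theory.
Local Open Scope ring_scope.
Set Implicit Arguments. Unset Strict Implicit.

Notation TT k := {mpoly 'F_2[k]}.

Lemma F2_2 (x : 'F_2) : x + x = 0.
Proof. apply/val_inj. case: x => -[|[|m]] //= Hm. Qed.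
Lemma F2_2n (x : 'F_2) : x *+ 2 = 0.
Proof. by rewrite mulr2n F2_2. Qed.
Lemma addpp (k : nat) (p : TT k) : p + p = 0.
Proof. by apply/mpolyP => m; rewrite mcoeffD mcoeff0 F2_2. Qed.
Lemma oppF2 (k : nat) (p : TT k) : - p = p.
Proof. by rewrite -[LHS]add0r -(addpp p) -addrA subrr addr0. Qed.
Lemma subF2 (k : nat) (p q : TT k) : p - q = p + q.
Proof. by rewrite oppF2. Qed.
Lemma sqrD_F2 (k : nat) (p q : TT k) : (p + q) ^+ 2 = p ^+ 2 + q ^+ 2.
Proof. by rewrite sqrrD -addrA [_ *+ 2 + _]addrC addrA mulr2n addpp addr0. Qed.
Lemma sqr_sum_F2 (k : nat) (I : Type) (r : seq I) (P : pred I) (F : I -> TT k) :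
  (\sum_(i <- r | P i) F i) ^+ 2 = \sum_(i <- r | P i) F i ^+ 2.
Proof.
elim: r => [|x r IH]; first by rewrite !big_nil expr0n.
by rewrite !big_cons; case: (P x); rewrite ?sqrD_F2 IH.
Qed.

Lemma mcoeff_mulX (k : nat) (p : TT k) m nu :
  (p * 'X_[m])@_nu = if (m <= nu)%MM then p@_(nu - m) else 0.
Proof.
case: ifP => h.
  by rewrite -{1}(submK h) addmC mcoeffMX.
apply: memN_msupp_eq0; rewrite (perm_mem (msuppMX p m)).
apply/mapP => -[m' _ E]; move: h; rewrite E lem_addr //.
Qed.

Definition MI (k : nat) (P : pred 'X_{1..k}) (p : TT k) :=
  forall nu, ~~ P nu -> p@_nu = 0.

Definition upclosed (k : nat) (P : pred 'X_{1..k}) :=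
  forall m m', P m -> P (m + m')%MM.

Section MIlemmas.
Variables (k : nat) (P : pred 'X_{1..k}).

Lemma MI0 : MI P 0.
Proof. by move=> nu _; rewrite mcoeff0. Qed.
Lemma MID p q : MI P p -> MI P q -> MI P (p + q).
Proof. by move=> hp hq nu h; rewrite mcoeffD hp // hq // addr0. Qed.
Lemma MIN p : MI P p -> MI P (- p).
Proof. by move=> hp nu h; rewrite mcoeffN hp // oppr0. Qed.
Lemma MIB p q : MI P p -> MI P q -> MI P (p - q).
Proof. by move=> hp hq; apply: MID => //; apply: MIN. Qed.
Lemma MIZ c p : MI P p -> MI P (c *: p).
Proof. by move=> hp nu h; rewrite mcoeffZ hp // mulr0. Qed.
Lemma MI_sum (I : Type) (r : seq I) (Q : pred I) (F : I -> TT k) :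
  (forall i, Q i -> MI P (F i)) -> MI P (\sum_(i <- r | Q i) F i).
Proof.
move=> h; elim: r => [|x r IH]; first by rewrite big_nil; apply: MI0.
by rewrite big_cons; case: ifP => // hx; apply: MID => //; apply: h.
Qed.
Lemma MIMr p q : upclosed P -> MI P p -> MI P (p * q).
Proof.
move=> up hp nu h; rewrite mcoeffM big1 // => -[k1 k2] /= /eqP E.
rewrite hp ?mul0r //; apply/negP => Hk; move: h; rewrite E.
by move/(up _ k2): Hk => ->.
Qed.
Lemma MIMl p q : upclosed P -> MI P p -> MI P (q * p).
Proof. by move=> up hp; rewrite mulrC; apply: MIMr. Qed.
Lemma MIX m : P m -> MI P 'X_[m].
Proof.
move=> hm nu h; rewrite mcoeffX; case: eqP => // E.
by move: h; rewrite -E hm.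
Qed.
Lemma MI_weaken (Q : pred 'X_{1..k}) p : MI P p -> (forall nu, P nu -> Q nu) -> MI Q p.
Proof. by move=> hp hPQ nu h; apply: hp; apply/negP => /hPQ; apply/negP. Qed.

End MIlemmas.

Definition Sq (k : nat) (Q : pred 'I_k) : pred 'X_{1..k} :=
  fun nu => [exists i, Q i && (1 < nu i)%N].

Section SqLemmas.
Variables (k : nat) (Q : pred 'I_k).

Lemma Sq_up : upclosed (Sq Q).
Proof.
move=> m m' /existsP [i /andP [qi hi]]; apply/existsP; exists i.
by rewrite qi mnmDE (leq_trans hi) ?leq_addr.
Qed.

Lemma Sq_addU (nu : 'X_{1..k}) (j : 'I_k) : nu j = 0%N -> Sq Q (nu + U_(j))%MM = Sq Q nu.
Proof.
move=> h; apply/existsP/existsP => -[i /andP [qi hi]]; exists i; rewrite qi /=;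
  move: hi; rewrite mnmDE mnm1E; case: eqP => [<-|]; rewrite ?h ?addn0 //.
Qed.

Lemma Sq_addU2 (nu : 'X_{1..k}) (j : 'I_k) : ~~ Q j -> Sq Q (nu + U_(j) *+ 2)%MM = Sq Q nu.
Proof.
move=> h; apply/existsP/existsP => -[i /andP [qi hi]]; exists i; rewrite qi /=;
  move: hi; rewrite mnmDE mulmnE mnm1E; case: eqP => [E|]; rewrite ?addn0 //;
  by move: qi; rewrite -E (negbTE h).
Qed.

Lemma Sq_U2 (j : 'I_k) : Q j -> Sq Q (U_(j) *+ 2)%MM.
Proof. by move=> h; apply/existsP; exists j; rewrite h mulmnE mnm1E eqxx. Qed.

Lemma Sq_sub (Q' : pred 'I_k) (nu : 'X_{1..k}) : (forall i, Q i -> Q' i) -> Sq Q nu -> Sq Q' nu.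
Proof.
by move=> h /existsP [i /andP [qi hi]]; apply/existsP; exists i; rewrite h.
Qed.

End SqLemmas.

Lemma XU2 (k : nat) (j : 'I_k) : ('X_j : TT k) ^+ 2 = 'X_[U_(j) *+ 2].
Proof. by rewrite mpolyXn. Qed.

Lemma in_idealP (k : nat) (gs : seq (TT k)) a :
  in_ideal gs a <-> exists c : nat -> TT k, a = \sum_(i < size gs) c i * gs`_i.
Proof.
split => [[cs [_ ->]]|[c ->]]; first by exists (fun i => cs`_i).
exists (mkseq c (size gs)); rewrite size_mkseq; split => //.
by apply: eq_bigr => i _; rewrite nth_mkseq.
Qed.

Section Ideal.
Variables (k : nat) (gs : seq (TT k)).

Lemma in_ideal0 : in_ideal gs 0.
Proof. by apply/in_idealP; exists (fun _ => 0); rewrite big1 // => i; rewrite mul0r. Qed.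

Lemma in_idealD a b : in_ideal gs a -> in_ideal gs b -> in_ideal gs (a + b).
Proof.
move=> /in_idealP [c ->] /in_idealP [d ->]; apply/in_idealP.
by exists (fun i => c i + d i); rewrite -big_split; apply: eq_bigr => i _; rewrite mulrDl.
Qed.

Lemma in_idealM q a : in_ideal gs a -> in_ideal gs (q * a).
Proof.
move=> /in_idealP [c ->]; apply/in_idealP; exists (fun i => q * c i).
by rewrite mulr_sumr; apply: eq_bigr => i _; rewrite mulrA.
Qed.

Lemma in_idealN a : in_ideal gs a -> in_ideal gs (- a).
Proof. by move=> h; rewrite -mulN1r; apply: in_idealM. Qed.

Lemma in_idealB a b : in_ideal gs a -> in_ideal gs b -> in_ideal gs (a - b).
Proof. by move=> ha hb; apply: in_idealD => //; apply: in_idealN. Qed.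

Lemma in_ideal_gen g : g \in gs -> in_ideal gs g.
Proof.
move=> hg; apply/in_idealP; exists (fun i => (i == index g gs)%:R).
have hgi : (index g gs < size gs)%N by rewrite index_mem.
rewrite (bigD1 (Ordinal hgi)) //= eqxx mul1r nth_index //.
rewrite big1 ?addr0 // => i hi; case: eqP => E; last by rewrite mul0r.
by move: hi; rewrite (_ : i = Ordinal hgi) ?eqxx //; apply/val_inj.
Qed.

Lemma in_ideal_sum (I : Type) (r : seq I) (P : pred I) (F : I -> TT k) :
  (forall i, P i -> in_ideal gs (F i)) -> in_ideal gs (\sum_(i <- r | P i) F i).
Proof.
move=> h; elim: r => [|x r IH]; first by rewrite big_nil; apply: in_ideal0.
by rewrite big_cons; case: ifP => // hx; apply: in_idealD => //; apply: h.
Qed.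

Lemma in_ideal_MI (P : pred 'X_{1..k}) a : upclosed P ->
  (forall g, g \in gs -> MI P g) -> in_ideal gs a -> MI P a.
Proof.
move=> up hg /in_idealP [c ->]; apply: MI_sum => i _; apply: MIMl => //.
by apply: hg; apply: mem_nth.
Qed.

Lemma MI_in_ideal (P : pred 'X_{1..k}) a :
  (forall m, P m -> exists2 g, g \in gs & exists q, 'X_[m] = q * g) ->
  MI P a -> in_ideal gs a.
Proof.
move=> hP ha; rewrite [a]mpolyE; apply: in_ideal_sum => m _.
case: (boolP (P m)) => [/hP [g gin [q ->]]|hm]; last by rewrite ha // scale0r; apply: in_ideal0.
by rewrite -mul_mpolyC mulrA; apply: in_idealM; apply: in_ideal_gen.
Qed.

End Ideal.

Lemma vanish (k k' : nat) (E f g : TT k -> TT k') (good : pred 'I_k) :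
  (forall p q, E (p + q) = E p + E q) ->
  (forall c p, E (c *: p) = c *: E p) ->
  (forall p q, E (p * q) = E p * f q + g p * E q) ->
  E 1 = 0 ->
  (forall i, good i -> E 'X_i = 0) ->
  forall p, (forall m i, p@_m != 0 -> ~~ good i -> m i = 0%N) -> E p = 0.
Proof.
move=> hD hZ hM h1 hX p hp.
have E0 : E 0 = 0 by apply: (@addrI _ (E 0)); rewrite -hD !addr0.
rewrite [p]mpolyE (big_morph E hD E0) big1_seq // => m /andP [_ hm].
rewrite hZ mpolyXE_id; apply/eqP; rewrite scaler_eq0; apply/orP; right; apply/eqP.
apply: (big_ind (fun x => E x = 0)) => //.
  by move=> x y hx hy; rewrite hM hx hy mul0r mulr0 addr0.
move=> i _; case: (boolP (good i)) => gi.
  elim: (m i) => [|e IH]; first by rewrite expr0.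
  by rewrite exprS hM IH hX // mul0r mulr0 addr0.
by rewrite (hp m i) ?expr0 // -mcoeff_msupp.
Qed.

Definition der (k : nat) (P : pred 'I_k) (F : 'I_k -> TT k) (p : TT k) : TT k :=
  \sum_(i < k | P i) mderiv i p * F i.

Section Der.
Variables (k : nat) (P : pred 'I_k) (F : 'I_k -> TT k).

Lemma derD p q : der P F (p + q) = der P F p + der P F q.
Proof. by rewrite /der -big_split; apply: eq_bigr => i _; rewrite mderivD mulrDl. Qed.
Lemma derZ c p : der P F (c *: p) = c *: der P F p.
Proof. by rewrite /der scaler_sumr; apply: eq_bigr => i _; rewrite mderivZ scalerAl. Qed.
Lemma derN p : der P F (- p) = - der P F p.
Proof. by rewrite /der -sumrN; apply: eq_bigr => i _; rewrite mderivN mulNr. Qed.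
Lemma derB p q : der P F (p - q) = der P F p - der P F q.
Proof. by rewrite derD derN. Qed.
Lemma der0 : der P F 0 = 0.
Proof. by rewrite /der big1 // => i _; rewrite mderiv0 mul0r. Qed.
Lemma derM p q : der P F (p * q) = der P F p * q + p * der P F q.
Proof.
rewrite /der mulr_suml mulr_sumr -big_split; apply: eq_bigr => i _.
by rewrite mderivM mulrDl; congr (_ + _); rewrite -!mulrA ?[q * _]mulrC.
Qed.
Lemma der1 : der P F 1 = 0.
Proof. by rewrite /der big1 // => i _; rewrite -mpolyC1 mderivC mul0r. Qed.
Lemma der_sum (I : Type) (r : seq I) (Q : pred I) (G : I -> TT k) :
  der P F (\sum_(i <- r | Q i) G i) = \sum_(i <- r | Q i) der P F (G i).
Proof. by apply: big_morph; [apply: derD | apply: der0]. Qed.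

Lemma mderivXU (i j : 'I_k) : mderiv i ('X_j : TT k) = (j == i)%:R.
Proof.
rewrite mderivX mnm1E; case: eqP => [->|_]; last by rewrite scale0r.
by rewrite (_ : (U_(i) - U_(i))%MM = 0%MM) ?mpolyX0 ?scale1r //; apply/mnmP => l; rewrite !mnmE subnn.
Qed.

Lemma derX (j : 'I_k) : der P F 'X_j = if P j then F j else 0.
Proof.
rewrite /der; case: ifP => hj.
  rewrite (bigD1 j) //= mderivXU eqxx mul1r big1 ?addr0 // => i /andP [_ hi].
  by rewrite mderivXU eq_sym (negbTE hi) mul0r.
by rewrite big1 // => i hi; rewrite mderivXU; case: eqP => E; rewrite ?mul0r //; move: hi; rewrite -E hj.
Qed.

End Der.

Definition divk (k : nat) (i : 'I_k) (e : nat) (p : TT k) : TT k :=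
  \sum_(m <- msupp p | (e <= m i)%N) p@_m *: 'X_[m - U_(i) *+ e].

Lemma mcoeff_divk (k : nat) (i : 'I_k) e (p : TT k) nu :
  (divk i e p)@_nu = p@_(nu + U_(i) *+ e).
Proof.
rewrite /divk raddf_sum /=.
have -> : p@_(nu + U_(i) *+ e) = \sum_(m <- msupp p) p@_m * (m == (nu + U_(i) *+ e)%MM)%:R.
  by rewrite {1}[p]mpolyE raddf_sum /=; apply: eq_bigr => m _; rewrite mcoeffZ mcoeffX.
rewrite big_mkcond /=; apply: eq_bigr => m _.
rewrite mcoeffZ mcoeffX; case: ifP => hm.
  have hle : (U_(i) *+ e <= m)%MM.
    by apply/mnm_lepP => j; rewrite mulmnE mnm1E; case: eqP => [<-|]; rewrite ?mul1n ?mul0n.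
  by rewrite -(inj_eq (@addIm _ (U_(i) *+ e)%MM)) /= submK.
case: eqP => E; rewrite ?mulr0 //.
by move: hm; rewrite E mnmDE mulmnE mnm1E eqxx mul1n leq_addl.
Qed.

Lemma divk_mulX (k : nat) (i : 'I_k) e (p : TT k) nu :
  (divk i e p * 'X_[U_(i) *+ e])@_nu = if (e <= nu i)%N then p@_nu else 0.
Proof.
rewrite mcoeff_mulX mcoeff_divk.
have -> : (U_(i) *+ e <= nu)%MM = (e <= nu i)%N.
  apply/mnm_lepP/idP => [/(_ i)|h j]; first by rewrite mulmnE mnm1E eqxx mul1n.
  by rewrite mulmnE mnm1E; case: eqP => [<-|]; rewrite ?mul1n ?mul0n.
case: ifP => // h; rewrite submK //.
by apply/mnm_lepP => j; rewrite mulmnE mnm1E; case: eqP => [<-|]; rewrite ?mul1n ?mul0n.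
Qed.

Lemma compX_tuple (k k' : nat) (F : 'I_k -> TT k') (i : 'I_k) :
  ('X_i \mPo [tuple F j | j < k]) = F i.
Proof. by rewrite comp_mpolyXU -tnth_nth tnth_mktuple. Qed.

Lemma compZ (k k' : nat) (t : k.-tuple (TT k')) c (p : TT k) :
  (c *: p) \mPo t = c *: (p \mPo t).
Proof. by rewrite linearZ. Qed.

Lemma MI_deriv (k : nat) (Q : pred 'I_k) (i : 'I_k) (p : TT k) :
  Q i -> MI (Sq Q) p -> MI (Sq Q) (mderiv i p).
Proof.
move=> qi hp nu hnu; rewrite mcoeff_deriv.
case E: (nu i) => [|[|e]].
- by rewrite hp ?mul0rn // Sq_addU.
- by rewrite F2_2n.
- by move: hnu; rewrite /Sq; case/existsP; exists i; rewrite qi E.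
Qed.

Lemma F2_cancel (k : nat) (x y z : TT k) : x + (y + z) + (x + z) = y.
Proof.
have -> : x + (y + z) + (x + z) = y + (x + x) + (z + z) by ring.
by rewrite !addpp !addr0.
Qed.

Lemma telescope0 (k : nat) (y : nat -> TT k) i d :
  \sum_(i.+1 <= l < (i + d.+1)%N) (y l.-1 + y l) = y i + y (i + d)%N.
Proof.
elim: d => [|d IH]; first by rewrite addn1 big_geq // addn0 addpp.
rewrite addnS big_nat_recr /=; last by lia.
by rewrite IH addnS /= -addrA [X in _ + X]addrA addpp add0r.
Qed.

Lemma telescope (k : nat) (y : nat -> TT k) i N : (i < N)%N ->
  \sum_(i.+1 <= l < N) (y l.-1 + y l) = y i + y N.-1.
Proof.
move=> h; have E : N = (i + (N - i.+1).+1)%N by lia.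
by rewrite E telescope0; congr (_ + y _); lia.
Qed.

Lemma cyclic_sum (k : nat) (y : nat -> TT k) n : (1 <= n)%N ->
  \sum_(j < n) (y ((j + n).-1 %% n)%N + y j) = 0.
Proof.
case: n => // n _; rewrite big_split /=.
suff -> : \sum_(j < n.+1) y ((j + n.+1).-1 %% n.+1)%N = \sum_(j < n.+1) y j by rewrite addpp.
rewrite big_ord_recl big_ord_recr /= modn_small // addrC; congr (_ + _).
apply: eq_bigr => j _; rewrite add0n addnS /= -addnS modnDr modn_small //; have := ltn_ord j; lia.
Qed.

Lemma twist_id (R : comRingType) (a b c d e f : R) :
  a * b + c * d - (e * b + c * f) = (a - e) * b + c * (d - f).
Proof. by ring. Qed.

Lemma XvE (k : nat) (i : 'I_k) : Xv k i = 'X_i.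
Proof. by rewrite /Xv valK. Qed.

Lemma Xv_out (k i : nat) : (k <= i)%N -> Xv k i = 0.
Proof. by move=> h; rewrite /Xv insubF // ltnNge h. Qed.

Lemma Xv_ord (k i : nat) (h : (i < k)%N) : Xv k i = 'X_(Ordinal h).
Proof. by rewrite -XvE. Qed.

Section Main.
Variable n : nat.
Hypothesis hn : (1 <= n)%N.

Local Notation k := (kA n).
Local Notation nn := (n * n)%N.
Local Notation T := (TT (kA n)).

Lemma kAE : kA n = (n * n + n)%N.
Proof. by rewrite /kA mulSn addnC. Qed.

Lemma hAE o j : hA n o j = Xv k (o * n + j).
Proof. by []. Qed.

Definition PIAQ : pred 'I_k := fun i => (n <= i)%N.
Definition PIA := Sq PIAQ.

Lemma PIA_up : upclosed PIA.
Proof. exact: Sq_up. Qed.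

Lemma inIA_MI (a : T) : inIA a <-> MI PIA a.
Proof.
split.
  apply: in_ideal_MI; first exact: PIA_up.
  move=> g /allpairsP [[o j] /= [ho hj ->]].
  move: ho hj; rewrite !mem_iota => /andP [ho1 ho2] /andP [_ hj].
  have hk : (o * n + j < k)%N by rewrite kAE; nia.
  rewrite hAE (Xv_ord hk) XU2; apply: MIX; apply: Sq_U2; rewrite /PIAQ /=; nia.
apply: MI_in_ideal => m /existsP [i /andP [hi hmi]].
rewrite /PIAQ /= in hi.
exists ('X_i ^+ 2).
  have -> : ('X_i : T) = hA n (i %/ n) (i %% n) by rewrite hAE -divn_eq XvE.
  apply: allpairs_f; rewrite mem_iota.
    have hik : (i < n * n + n)%N by rewrite -kAE.
    apply/andP; split; first by rewrite divn_gt0 //.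
    by rewrite add1n ltn_divLR //; nia.
  by rewrite add0n ltn_mod; lia.
exists 'X_[m - U_(i) *+ 2]; rewrite XU2 -mpolyXD submK //.
apply/mnm_lepP => j; rewrite mulmnE mnm1E; case: eqP => [<-|]; rewrite ?mul1n ?mul0n //.
Qed.

Lemma ltkA (i : 'I_k) : (i < nn + n)%N.
Proof. by case: i => /= i; rewrite kAE. Qed.

Definition K (m : nat) (p : T) := forall (nu : 'X_{1..k}) (i : 'I_k),
  (nn + m < i)%N -> nu i != 0%N -> p@_nu = 0.

Section KLemmas.
Variable m : nat.

Lemma K0 : K m 0.
Proof. by move=> nu i _ _; rewrite mcoeff0. Qed.
Lemma KD p q : K m p -> K m q -> K m (p + q).
Proof. by move=> hp hq nu i h1 h2; rewrite mcoeffD (hp nu i) // (hq nu i) // addr0. Qed.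
Lemma KN p : K m p -> K m (- p).
Proof. by move=> hp nu i h1 h2; rewrite mcoeffN (hp nu i) // oppr0. Qed.
Lemma KB p q : K m p -> K m q -> K m (p - q).
Proof. by move=> hp hq; apply: KD => //; apply: KN. Qed.
Lemma K_sum (I : Type) (r : seq I) (Q : pred I) (F : I -> T) :
  (forall i, Q i -> K m (F i)) -> K m (\sum_(i <- r | Q i) F i).
Proof.
move=> h; elim: r => [|x r IH]; first by rewrite big_nil; apply: K0.
by rewrite big_cons; case: ifP => // hx; apply: KD => //; apply: h.
Qed.
Lemma KM p q : K m p -> K m q -> K m (p * q).
Proof.
move=> hp hq nu i h1 h2; rewrite mcoeffM big1 // => -[k1 k2] /= /eqP E.
have := congr1 (fun mm : 'X_{1..k} => mm i) E; rewrite /= mnmDE => Ei.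
move: h2; rewrite Ei; case E1: (k1 i) => [|e] /=.
  by move=> h; rewrite (hq k2 i) ?mulr0.
by rewrite (hp k1 i) ?mul0r // E1.
Qed.
Lemma K1 : K m 1.
Proof.
move=> nu i _ h; rewrite -mpolyX0 mcoeffX; case: eqP => // E.
by move: h; rewrite -E mnm0E.
Qed.
Lemma KX (i : 'I_k) : (i <= nn + m)%N -> K m 'X_i.
Proof.
move=> hi nu j h1 h2; rewrite mcoeffX; case: eqP => // E.
have hij : i = j by apply/eqP; move: h2; rewrite -E mnm1E; case: (i == j).
by move: h1; rewrite -hij; lia.
Qed.
Lemma KXv j : (j <= nn + m)%N -> K m (Xv k j).
Proof.
move=> hj; case: (ltnP j k) => hk; first by rewrite (Xv_ord hk); apply: KX.
by rewrite Xv_out //; apply: K0.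
Qed.
Lemma KXn p e : K m p -> K m (p ^+ e).
Proof.
move=> hp; elim: e => [|e IH]; first by rewrite expr0; apply: K1.
by rewrite exprS; apply: KM.
Qed.
Lemma K_deriv (i : 'I_k) p : K m p -> K m (mderiv i p).
Proof.
move=> hp nu j h1 h2; rewrite mcoeff_deriv (hp _ j) ?mul0rn //.
by rewrite mnmDE -lt0n (leq_trans _ (leq_addr _ _)) // lt0n.
Qed.
Lemma deriv_K0 (i : 'I_k) p : (nn + m < i)%N -> K m p -> mderiv i p = 0.
Proof.
move=> hi hp; apply/mpolyP => nu; rewrite mcoeff0 mcoeff_deriv (hp _ i) ?mul0rn //.
by rewrite mnmDE mnm1E eqxx addn1.
Qed.
Lemma K_divk (i : 'I_k) e p : K m p -> K m (divk i e p).
Proof.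
move=> hp nu j h1 h2; rewrite mcoeff_divk (hp _ j) //.
by rewrite mnmDE -lt0n (leq_trans _ (leq_addr _ _)) // lt0n.
Qed.
Lemma K_mulX (i : 'I_k) e p : (i <= nn + m)%N -> K m p -> K m (p * 'X_[U_(i) *+ e]).
Proof.
move=> hi hp; rewrite -mpolyXn; apply: KM => //; apply: KXn; exact: KX.
Qed.

End KLemmas.

Lemma K_mono m1 m2 p : (m1 <= m2)%N -> K m1 p -> K m2 p.
Proof. by move=> hm hp nu i h1 h2; apply: (hp nu i) => //; lia. Qed.

Definition dBP : pred 'I_k := fun i => (nn < i)%N.
Definition dBF (i : 'I_k) : T := Xv k (i - nn) ^+ 2.
Definition dB := der dBP dBF.

Lemma dB_X (i : 'I_k) : dB 'X_i = if (nn < i)%N then Xv k (i - nn) ^+ 2 else 0.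
Proof. by rewrite /dB derX. Qed.

Lemma dB_K m p : K m p -> K m (dB p).
Proof.
move=> hp; apply: K_sum => i hi; apply: KM; first exact: K_deriv.
apply: KXn; apply: KXv; have := ltkA i; nia.
Qed.

Lemma dB_K0 p : K 0 p -> dB p = 0.
Proof.
move=> hp; rewrite /dB /der big1 // => i hi; rewrite (deriv_K0 (m := 0)) ?mul0r //.
by rewrite addn0.
Qed.

Lemma dB_IA p : MI PIA p -> MI PIA (dB p).
Proof.
move=> hp; apply: MI_sum => i hi; apply: MIMr; first exact: PIA_up.
apply: MI_deriv => //; rewrite /PIAQ; move: hi; rewrite /dBP; nia.
Qed.

Definition Qm (m : nat) : pred 'I_k := fun i => (n <= i)%N || (1 <= i <= m)%N.

Lemma dB_Pm m p : K m p -> MI (Sq (Qm m)) (dB p).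
Proof.
move=> hp; apply: MI_sum => i hi; case: (leqP i (nn + m)) => him.
  apply: MIMl; first exact: Sq_up.
  have hl : (i - nn < k)%N by apply: leq_ltn_trans (leq_subr _ _) (ltn_ord i).
  rewrite /dBF (Xv_ord hl) XU2; apply: MIX; apply: Sq_U2; rewrite /Qm /=.
  move: hi; rewrite /dBP => hi; apply/orP; right; lia.
by rewrite (deriv_K0 him hp) mul0r; apply: MI0.
Qed.

Lemma Qm_not m : (m.+1 < n)%N -> forall j : 'I_k, (j : nat) = m.+1 -> ~~ Qm m j.
Proof. by move=> hm j hj; rewrite /Qm hj negb_or; apply/andP; split; lia. Qed.

Lemma regular m r : (m.+1 < n)%N ->
  MI (Sq (Qm m)) (Xv k m.+1 ^+ 2 * r) -> MI (Sq (Qm m)) r.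
Proof.
move=> hm h nu hnu.
have hj : (m.+1 < k)%N by rewrite kAE; nia.
have := h (nu + U_(Ordinal hj) *+ 2)%MM.
rewrite Sq_addU2 ?hnu; last by apply: Qm_not.
rewrite (Xv_ord hj) XU2 mulrC mcoeff_mulX lem_addl addmK.
by move=> ->.
Qed.

Lemma splitr m r : (m < n)%N -> K 0 r -> MI (Sq (Qm m)) r ->
  exists s : nat -> T, (forall j, K 0 (s j)) /\
    MI PIA (r - \sum_(1 <= j < m.+1) Xv k j ^+ 2 * s j).
Proof.
elim: m r => [|m IH] r hm hr hmi.
  exists (fun _ => 0); split => [j|]; first exact: K0.
  rewrite big_geq // subr0; apply: (MI_weaken hmi) => nu; apply: Sq_sub => i.
  by rewrite /Qm /PIAQ; case/orP => // h; lia.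
have hj : (m.+1 < k)%N by rewrite kAE; nia.
pose j := Ordinal hj.
pose d := divk j 2 r.
pose r1 := r - d * 'X_[U_(j) *+ 2].
have Kd : K 0 d by apply: K_divk.
have Kr1 : K 0 r1 by apply: KB => //; apply: K_mulX => //=; nia.
have Mr1 : MI (Sq (Qm m)) r1.
  move=> nu hnu; rewrite mcoeffB divk_mulX; case: ifP => h2; first by rewrite subrr.
  rewrite subr0 hmi //; apply/negP => /existsP [i /andP [qi hi]].
  case: (i =P j) => [E|NE].
    by move: h2; rewrite -E hi.
  move/negP: hnu; apply; apply/existsP; exists i; rewrite hi andbT.
  move: qi; rewrite /Qm => /orP [->//|h3]; apply/orP; right.
  have : (i : nat) <> m.+1 by move=> E; apply: NE; apply: val_inj.
  lia.
have [s [hs Ms]] := IH r1 (ltnW hm) Kr1 Mr1.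
exists (fun l => if l == m.+1 then d else s l); split.
  by move=> l; case: ifP.
rewrite big_nat_recr //= eqxx.
rewrite (eq_big_nat _ _ (F2 := fun l => Xv k l ^+ 2 * s l)); last first.
  by move=> l /andP [_ hl]; rewrite ifN //; rewrite neq_ltn hl.
have -> : Xv k m.+1 ^+ 2 * d = d * 'X_[U_(j) *+ 2] by rewrite (Xv_ord hj) XU2 mulrC.
suff -> : r - (\sum_(1 <= i < m.+1) Xv k i ^+ 2 * s i + d * 'X_[U_(j) *+ 2]) =
  r1 - \sum_(1 <= i < m.+1) Xv k i ^+ 2 * s i by [].
by rewrite /r1; ring.
Qed.

Lemma decomp m a : (m.+1 < n)%N -> K m.+1 a -> exists a1 a2,
  [/\ K m a1, K m a2 & MI PIA (a - (a1 + Xv k (nn + m.+1) * a2))].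
Proof.
move=> hm ha.
have hz : (nn + m.+1 < k)%N by rewrite kAE; lia.
pose z := Ordinal hz.
pose b := a - divk z 2 a * 'X_[U_(z) *+ 2].
pose a1 := b - divk z 1 b * 'X_[U_(z) *+ 1].
pose a2 := divk z 1 b.
have Kb : K m.+1 b by apply: KB => //; apply: K_mulX => //; apply: K_divk.
have bE nu : b@_nu = if (2 <= nu z)%N then 0 else a@_nu.
  by rewrite mcoeffB divk_mulX; case: ifP; rewrite ?subrr ?subr0.
exists a1, a2; split.
- move=> nu i h1 h2; rewrite mcoeffB divk_mulX.
  case: ifP => h3; first by rewrite subrr.
  rewrite subr0 (Kb nu i) //.
  case: (i =P z) => [E|NE]; first by move: h3 h2; rewrite E; case: (nu z).
  have : (i : nat) <> nn + m.+1 by move=> E; apply: NE; apply: val_inj.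
  lia.
- move=> nu i h1 h2; rewrite mcoeff_divk mulm1n bE.
  case: ifP => // h3.
  apply: (ha _ i).
    case: (i =P z) => [E|NE]; first by move: h3; rewrite -E mnmDE mnm1E eqxx; lia.
    have : (i : nat) <> nn + m.+1 by move=> E; apply: NE; apply: val_inj.
    lia.
  by rewrite mnmDE addn_eq0 negb_and h2.
- have -> : a - (a1 + Xv k (nn + m.+1) * a2) = divk z 2 a * 'X_[U_(z) *+ 2].
    rewrite (Xv_ord hz) /a1 /a2 /b mulm1n; ring.
  apply: MIMl; first exact: PIA_up.
  by apply: MIX; apply: Sq_U2; rewrite /PIAQ /=; nia.
Qed.

Lemma extract m a1 a2 : (m.+1 < n)%N -> K m a1 -> K m a2 ->
  MI PIA (a1 + Xv k (nn + m.+1) * a2) -> MI PIA a1 /\ MI PIA a2.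
Proof.
move=> hm K1 K2 h.
have hz : (nn + m.+1 < k)%N by rewrite kAE; lia.
pose z := Ordinal hz.
have hzz : (nn + m < z)%N by rewrite /=; lia.
move: h; rewrite (Xv_ord hz) mulrC => h.
split => nu hnu.
  case E: (nu z) => [|e]; last by apply: (K1 nu z) => //; rewrite E.
  have := h nu hnu; rewrite mcoeffD mcoeff_mulX.
  by rewrite (_ : (U_(z) <= nu)%MM = false) ?addr0 // lep1mP E.
case E: (nu z) => [|e]; last by apply: (K2 nu z) => //; rewrite E.
have := h (nu + U_(z))%MM; rewrite /PIA Sq_addU // => /(_ hnu).
rewrite mcoeffD addmC mcoeffMX (K1 _ z) ?add0r //.
by rewrite mnmDE mnm1E eqxx E.
Qed.

Lemma dBD p q : dB (p + q) = dB p + dB q. Proof. exact: derD. Qed.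
Lemma dBB p q : dB (p - q) = dB p - dB q. Proof. exact: derB. Qed.
Lemma dBM p q : dB (p * q) = dB p * q + p * dB q. Proof. exact: derM. Qed.
Lemma dB0 : dB 0 = 0. Proof. exact: der0. Qed.
Lemma dB_sum (I : Type) (r : seq I) (Q : pred I) (G : I -> T) :
  dB (\sum_(i <- r | Q i) G i) = \sum_(i <- r | Q i) dB (G i).
Proof. exact: der_sum. Qed.

Lemma dB_w j : (1 <= j < n)%N -> dB (Xv k (nn + j)) = Xv k j ^+ 2.
Proof.
move=> hj; have hz : (nn + j < k)%N by rewrite kAE; lia.
by rewrite (Xv_ord hz) dB_X /= ifT ?addKn //; lia.
Qed.

Lemma dB_g j : (j <= nn)%N -> dB (Xv k j ^+ 2) = 0.
Proof. by move=> hj; apply: dB_K0; apply: KXn; apply: KXv; rewrite addn0. Qed.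

Lemma homol m : (m < n)%N -> forall a, K m a -> MI PIA (dB a) ->
  exists r b, [/\ K 0 r, K m b & MI PIA (a - r - dB b)].
Proof.
elim: m => [|m IH] hm a ha hc.
  exists a, 0; split => //; first exact: K0.
  by rewrite dB0 subrr subr0; apply: MI0.
have [a1 [a2 [K1 K2 Ma]]] := decomp hm ha.
pose W := Xv k (nn + m.+1).
pose g := Xv k m.+1 ^+ 2.
have dW : dB W = g by apply: dB_w; lia.
have dg : dB g = 0 by apply: dB_g; nia.
have Kg : K m g by apply: KXn; apply: KXv; nia.
have KW : K m.+1 W by apply: KXv.
have up := PIA_up.
have WE : W = Xv k (nn + m.+1) by [].
have gE : g = Xv k m.+1 ^+ 2 by [].
have Ma' : MI PIA (a - (a1 + W * a2)) by exact: Ma.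
clearbody W g.
have hsum : MI PIA (dB a1 + g * a2 + W * dB a2).
  have -> : dB a1 + g * a2 + W * dB a2 = dB a - dB (a - (a1 + W * a2)).
    by rewrite dBB dBD dBM dW; ring.
  by apply: MIB; [exact: hc | apply: dB_IA; exact: Ma'].
have hsum' : MI PIA (dB a1 + g * a2 + Xv k (nn + m.+1) * dB a2) by rewrite -WE.
have [M1 M2] := extract hm (KD (dB_K K1) (KM Kg K2)) (dB_K K2) hsum'.
have [r2 [b2 [Kr2 Kb2 Mr2]]] := IH (ltnW hm) a2 K2 M2.
have Kc : K m (a1 + g * b2) by apply: KD => //; apply: KM.
have e1 : MI PIA (g * r2 + dB (a1 + g * b2)).
  have -> : g * r2 + dB (a1 + g * b2) = (dB a1 + g * a2) - g * (a2 - r2 - dB b2).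
    by rewrite dBD dBM dg; ring.
  by apply: MIB => //; apply: MIMl.
have e2 : MI (Sq (Qm m)) (g * r2).
  have -> : g * r2 = (g * r2 + dB (a1 + g * b2)) - dB (a1 + g * b2) by ring.
  apply: MIB; last exact: dB_Pm.
  apply: (MI_weaken e1) => nu; apply: Sq_sub => i; rewrite /PIAQ /Qm => ->.
  by [].
have e2' : MI (Sq (Qm m)) (Xv k m.+1 ^+ 2 * r2) by rewrite -gE.
have Mr2' := regular hm e2'.
have [s [Ks Ms]] := splitr (ltnW hm) Kr2 Mr2'.
pose beta := \sum_(1 <= j < m.+1) Xv k (nn + j) * s j + b2.
have Kbeta : K m beta.
  apply: KD => //; rewrite big_seq_cond; apply: K_sum => j /andP [hj _].
  move: hj; rewrite mem_index_iota => /andP [hj1 hj2].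
  apply: KM; first by apply: KXv; lia.
  by apply: (K_mono (m1 := 0)).
have dbeta : dB beta = \sum_(1 <= j < m.+1) Xv k j ^+ 2 * s j + dB b2.
  rewrite dBD dB_sum; congr (_ + _); apply: eq_big_nat => j hj.
  by rewrite dBM dB_w ?(dB_K0 (Ks j)) ?mulr0 ?addr0 //; lia.
have M4 : MI PIA (a2 - dB beta).
  have -> : a2 - dB beta = (a2 - r2 - dB b2) + (r2 - \sum_(1 <= j < m.+1) Xv k j ^+ 2 * s j).
    by rewrite dbeta; ring.
  exact: MID.
pose a0 := a1 + g * beta.
have Ka0 : K m a0 by apply: KD => //; apply: KM.
have a0E : a0 = a1 + g * beta by [].
clearbody a0 beta.
have Mc0 : MI PIA (dB a0).
  have -> : dB a0 = (dB a1 + g * a2) - g * (a2 - dB beta).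
    by rewrite a0E dBD dBM dg; ring.
  by apply: MIB => //; apply: MIMl.
have [r0 [b0 [Kr0 Kb0 M0]]] := IH (ltnW hm) a0 Ka0 Mc0.
exists r0, (b0 + W * beta); split; first exact: Kr0.
  apply: KD; first exact: (K_mono (leqnSn m)).
  by apply: KM => //; apply: (K_mono (leqnSn m)).
have -> : a - r0 - dB (b0 + W * beta) =
   (a - (a1 + W * a2)) + W * (a2 - dB beta) + (a0 - r0 - dB b0) - (g * beta + g * beta).
  by rewrite dBD dBM dW a0E; ring.
rewrite addpp subr0; apply: MID; last exact: M0.
apply: MID; first exact: Ma'.
exact: MIMl.
Qed.

Definition dAP : pred 'I_k := fun i => (nn <= i)%N.
Definition dAF (i : 'I_k) : T :=
  hA n 0 ((i - nn + n).-1 %% n) ^+ 2 + hA n 0 (i - nn) ^+ 2.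
Lemma dA_der p : dA p = der dAP dAF p. Proof. by []. Qed.

Lemma hA0 j : hA n 0 j = Xv k j.
Proof. by rewrite hAE mul0n add0n. Qed.

Lemma dA_X (i : 'I_k) : dA 'X_i = if (nn <= i)%N then dAF i else 0.
Proof. by rewrite dA_der derX. Qed.

Lemma dA_small j : (j < nn)%N -> dA (Xv k j) = 0.
Proof.
move=> hj; case: (ltnP j k) => hk; last by rewrite Xv_out // dA_der der0.
by rewrite (Xv_ord hk) dA_X /= leqNgt hj.
Qed.

Lemma dA_z l : (l < n)%N -> dA (Xv k (nn + l)) = Xv k ((l + n).-1 %% n) ^+ 2 + Xv k l ^+ 2.
Proof.
move=> hl; have hk : (nn + l < k)%N by rewrite kAE; lia.
by rewrite (Xv_ord hk) dA_X /= leq_addr /dAF /= addKn !hA0.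
Qed.

Lemma dA_z1 l : (1 <= l < n)%N -> dA (Xv k (nn + l)) = Xv k l.-1 ^+ 2 + Xv k l ^+ 2.
Proof.
move=> /andP [h1 h2]; rewrite dA_z //.
have -> : (l + n).-1 = (l.-1 + n)%N by lia.
by rewrite modnDr modn_small //; lia.
Qed.

Lemma dAD (p q : T) : dA (p + q) = dA p + dA q. Proof. exact: derD. Qed.
Lemma dAB (p q : T) : dA (p - q) = dA p - dA q. Proof. exact: derB. Qed.
Lemma dAM (p q : T) : dA (p * q) = dA p * q + p * dA q. Proof. exact: derM. Qed.
Lemma dAZ c (p : T) : dA (c *: p) = c *: dA p. Proof. exact: derZ. Qed.
Lemma dA1 : dA (1 : T) = 0. Proof. exact: der1. Qed.
Lemma dA_sum (I : Type) (r : seq I) (Q : pred I) (G : I -> T) :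
  dA (\sum_(i <- r | Q i) G i) = \sum_(i <- r | Q i) dA (G i).
Proof. exact: der_sum. Qed.

Lemma rhoAE : rhoA n = \sum_(j < n) Xv k (nn + j).
Proof. by []. Qed.

Lemma dA_rho : dA (rhoA n) = 0.
Proof.
rewrite rhoAE dA_sum (eq_bigr (fun j : 'I_n => Xv k ((j + n).-1 %% n) ^+ 2 + Xv k j ^+ 2)).
  by rewrite (cyclic_sum (fun t => Xv k t ^+ 2)).
by move=> j _; rewrite dA_z.
Qed.

Definition sig_f (i : nat) : T :=
  if i == 0%N then Xv k n.-1 else if (i < n)%N then Xv k i.-1 + Xv k i
  else if i == nn then rhoA n else Xv k i.
Definition tau_f (i : nat) : T :=
  if (i < n)%N then Xv k 0 + \sum_(i.+1 <= l < n) Xv k l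
  else if i == nn then \sum_(j < n) Xv k (nn + j) else Xv k i.
Definition sig (p : T) : T := p \mPo [tuple sig_f i | i < k].
Definition tau (p : T) : T := p \mPo [tuple tau_f i | i < k].

Lemma sigX (i : 'I_k) : sig 'X_i = sig_f i. Proof. exact: compX_tuple. Qed.
Lemma tauX (i : 'I_k) : tau 'X_i = tau_f i. Proof. exact: compX_tuple. Qed.
Lemma sigXv j : (j < k)%N -> sig (Xv k j) = sig_f j.
Proof. by move=> h; rewrite (Xv_ord h) sigX. Qed.
Lemma tauXv j : (j < k)%N -> tau (Xv k j) = tau_f j.
Proof. by move=> h; rewrite (Xv_ord h) tauX. Qed.

Lemma sigD p q : sig (p + q) = sig p + sig q. Proof. exact: raddfD. Qed.
Lemma sigB p q : sig (p - q) = sig p - sig q. Proof. exact: raddfB. Qed.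
Lemma sigM p q : sig (p * q) = sig p * sig q. Proof. exact: rmorphM. Qed.
Lemma sigZ c p : sig (c *: p) = c *: sig p. Proof. exact: compZ. Qed.
Lemma sig1 : sig 1 = 1. Proof. exact: rmorph1. Qed.
Lemma sig_sum (I : Type) (r : seq I) (Q : pred I) (G : I -> T) :
  sig (\sum_(i <- r | Q i) G i) = \sum_(i <- r | Q i) sig (G i).
Proof. exact: raddf_sum. Qed.
Lemma sigXn p e : sig (p ^+ e) = sig p ^+ e. Proof. exact: rmorphXn. Qed.

Lemma tauD p q : tau (p + q) = tau p + tau q. Proof. exact: raddfD. Qed.
Lemma tauB p q : tau (p - q) = tau p - tau q. Proof. exact: raddfB. Qed.
Lemma tauM p q : tau (p * q) = tau p * tau q. Proof. exact: rmorphM. Qed.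
Lemma tauZ c p : tau (c *: p) = c *: tau p. Proof. exact: compZ. Qed.
Lemma tau1 : tau 1 = 1. Proof. exact: rmorph1. Qed.
Lemma tau_sum (I : Type) (r : seq I) (Q : pred I) (G : I -> T) :
  tau (\sum_(i <- r | Q i) G i) = \sum_(i <- r | Q i) tau (G i).
Proof. exact: raddf_sum. Qed.
Lemma tauXn p e : tau (p ^+ e) = tau p ^+ e. Proof. exact: rmorphXn. Qed.

Lemma ord0k : (0 < k)%N. Proof. by rewrite kAE; nia. Qed.
Lemma nn_pos : (1 <= nn)%N. Proof. nia. Qed.

Lemma rho_split : rhoA n = Xv k nn + \sum_(j < n | j != Ordinal hn :> nat) Xv k (nn + j).
Proof.
by rewrite rhoAE (bigD1 (Ordinal hn)) //= addn0.
Qed.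

Lemma z_ne0 (j : 'I_n) : j != Ordinal hn -> (j : nat) <> 0%N.
Proof. by move=> hj E; move/eqP: hj; apply; apply: val_inj. Qed.

Lemma sig_rest : \sum_(j < n | j != Ordinal hn) sig (Xv k (nn + j)) =
  \sum_(j < n | j != Ordinal hn) Xv k (nn + j).
Proof.
apply: eq_bigr => j hj; have := z_ne0 hj => hj0.
rewrite sigXv; last by rewrite kAE; have := ltn_ord j; lia.
rewrite /sig_f ifF; last by apply/negP => /eqP; nia.
rewrite ifF; last by apply/negP; nia.
by rewrite ifF //; apply/negP => /eqP; lia.
Qed.

Lemma tau_rest : \sum_(j < n | j != Ordinal hn) tau (Xv k (nn + j)) =
  \sum_(j < n | j != Ordinal hn) Xv k (nn + j).
Proof.
apply: eq_bigr => j hj; have := z_ne0 hj => hj0.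
rewrite tauXv; last by rewrite kAE; have := ltn_ord j; lia.
rewrite /tau_f ifF; last by apply/negP; nia.
by rewrite ifF //; apply/negP => /eqP; lia.
Qed.

Lemma sig_tau_X (i : 'I_k) : sig (tau_f i) = 'X_i.
Proof.
rewrite /tau_f; case: ifP => hi.
  rewrite sigD sig_sum sigXv ?ord0k // /sig_f eqxx.
  rewrite big_nat_cond (eq_bigr (fun l => Xv k l.-1 + Xv k l)); last first.
    move=> l /andP [/andP [h1 h2] _]; rewrite sigXv; last by rewrite kAE; lia.
    rewrite /sig_f ifF; last by lia.
    by rewrite ifT.
  rewrite -big_nat_cond telescope //.
  by rewrite addrC -addrA addpp addr0 XvE.
case: ifP => hi2.
  rewrite sig_sum (bigD1 (Ordinal hn)) //= addn0.
  rewrite sigXv; last by rewrite kAE; nia.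
  rewrite /sig_f ifF; last by apply/negP => /eqP; nia.
  rewrite ifF ?eqxx; last by apply/negP; nia.
  rewrite rho_split sig_rest -addrA addpp addr0.
  by rewrite -(eqP hi2) XvE.
rewrite sigXv ?ltn_ord // /sig_f ifF; last by apply/negP => /eqP E; move: hi; rewrite E; lia.
by rewrite hi hi2 XvE.
Qed.

Lemma tau_sig_X (i : 'I_k) : tau (sig_f i) = 'X_i.
Proof.
rewrite /sig_f; case: ifP => hi0.
  rewrite tauXv; last by rewrite kAE; nia.
  rewrite /tau_f ifT; last by lia.
  by rewrite prednK // big_geq // addr0 -XvE (eqP hi0).
case: ifP => hi.
  rewrite tauD (tauXv (ltn_ord i)) tauXv; last exact: leq_ltn_trans (leq_pred _) (ltn_ord i).
  have hpos : (0 < i)%N by rewrite lt0n hi0.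
  rewrite /tau_f !ifT; try lia.
  rewrite (prednK hpos).
  by rewrite big_ltn // F2_cancel XvE.
case: ifP => hi2.
  rewrite rho_split tauD tau_sum tauXv; last by rewrite kAE; nia.
  rewrite /tau_f ifF; last by apply/negP; nia.
  rewrite eqxx (bigD1 (Ordinal hn)) //= addn0 tau_rest -addrA addpp addr0.
  by rewrite -(eqP hi2) XvE.
by rewrite tauXv ?ltn_ord // /tau_f hi hi2 XvE.
Qed.

Lemma sig_tau p : sig (tau p) = p.
Proof.
apply/eqP; rewrite -subr_eq0; apply/eqP.
apply: (@vanish _ _ (fun p => sig (tau p) - p) (fun p => sig (tau p)) id predT).
- by move=> x y; rewrite tauD sigD opprD addrACA.
- by move=> c x; rewrite tauZ sigZ scalerBr.
- by move=> x y; rewrite tauM sigM mulrBl mulrBr addrA subrK.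
- by rewrite tau1 sig1 subrr.
- by move=> i _; rewrite tauX sig_tau_X subrr.
- by [].
Qed.

Lemma tau_sig p : tau (sig p) = p.
Proof.
apply/eqP; rewrite -subr_eq0; apply/eqP.
apply: (@vanish _ _ (fun p => tau (sig p) - p) (fun p => tau (sig p)) id predT).
- by move=> x y; rewrite sigD tauD opprD addrACA.
- by move=> c x; rewrite sigZ tauZ scalerBr.
- by move=> x y; rewrite sigM tauM mulrBl mulrBr addrA subrK.
- by rewrite sig1 tau1 subrr.
- by move=> i _; rewrite sigX tau_sig_X subrr.
- by [].
Qed.

Lemma dBZ c (p : T) : dB (c *: p) = c *: dB p. Proof. exact: derZ. Qed.
Lemma dB1 : dB (1 : T) = 0. Proof. exact: der1. Qed.

Lemma sig0 : sig 0 = 0. Proof. exact: raddf0. Qed.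

Lemma sig_dB_X (i : 'I_k) : sig (dB 'X_i) = dA (sig_f i).
Proof.
rewrite dB_X /sig_f.
case: (boolP ((i : nat) == 0%N)) => h0.
  have hi0 : (i : nat) = 0%N by move/eqP: h0.
  by rewrite hi0 /= sig0 dA_small //; nia.
case: (boolP (i < n)%N) => h1.
  rewrite ifF; last by apply/negP; nia.
  by rewrite sig0 dAD !dA_small ?addr0 //; nia.
case: (boolP ((i : nat) == nn)) => h2.
  by rewrite ifF ?sig0 ?dA_rho //; move/eqP: h2 => ->; rewrite ltnn.
case: (ltnP nn i) => h3.
  have hl : (i - nn < k)%N by apply: leq_ltn_trans (leq_subr _ _) (ltn_ord i).
  have hl2 : (i - nn < n)%N by have := ltkA i; lia.
  rewrite sigXn sigXv // /sig_f ifF; last by apply/negP => /eqP; lia.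
  rewrite ifT // sqrD_F2.
  rewrite (_ : Xv k i = Xv k (nn + (i - nn))); last by rewrite subnKC // ltnW.
  by rewrite dA_z1 //; apply/andP; split; lia.
rewrite sig0 dA_small //.
have : (i : nat) <> nn by move=> E; move: h2; rewrite E eqxx.
lia.
Qed.

Lemma sig_dB p : sig (dB p) = dA (sig p).
Proof.
apply/eqP; rewrite -subr_eq0; apply/eqP.
apply: (@vanish _ _ (fun p => sig (dB p) - dA (sig p)) sig sig predT).
- by move=> x y; rewrite dBD !sigD dAD opprD addrACA.
- by move=> c x; rewrite dBZ !sigZ dAZ scalerBr.
- by move=> x y; rewrite dBM sigD !sigM dAM; apply: twist_id.
- by rewrite dB1 sig0 sig1 dA1 subrr.
- by move=> i _; rewrite sig_dB_X sigX subrr.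
- by [].
Qed.

Lemma MI_Xv2 t : (n <= t)%N -> MI PIA (Xv k t ^+ 2).
Proof.
move=> ht; case: (ltnP t k) => hk.
  by rewrite (Xv_ord hk) XU2; apply: MIX; apply: Sq_U2.
by rewrite Xv_out // expr0n; apply: MI0.
Qed.

Lemma IA_stable (h : T -> T) :
  (forall p q, h (p + q) = h p + h q) -> (forall p q, h (p * q) = h p * h q) ->
  h 0 = 0 -> (forall t, (n <= t)%N -> (t < k)%N -> MI PIA (h (Xv k t ^+ 2))) ->
  forall x, inIA x -> inIA (h x).
Proof.
move=> hD hM h0 hg x /in_idealP [c ->]; apply/inIA_MI.
rewrite (big_morph h hD h0); apply: MI_sum => i _; rewrite hM.
apply: MIMl; first exact: PIA_up.
have : (IA_gens n)`_i \in IA_gens n by apply: mem_nth.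
case/allpairsP => [[o j] /= [ho hj ->]].
move: ho hj; rewrite !mem_iota => /andP [ho1 ho2] /andP [_ hj].
rewrite hAE; apply: hg; rewrite ?kAE; nia.
Qed.

Lemma sig_IA x : inIA x -> inIA (sig x).
Proof.
apply: IA_stable; [exact: sigD | exact: sigM | exact: raddf0 |].
move=> t h1 h2; rewrite sigXn sigXv // /sig_f ifF; last by apply/negP => /eqP; lia.
rewrite ifF; last by apply/negP; lia.
case: ifP => _; last exact: MI_Xv2.
rewrite rhoAE sqr_sum_F2; apply: MI_sum => j _; apply: MI_Xv2; nia.
Qed.

Lemma tau_IA x : inIA x -> inIA (tau x).
Proof.
apply: IA_stable; [exact: tauD | exact: tauM | exact: raddf0 |].
move=> t h1 h2; rewrite tauXn tauXv // /tau_f ifF; last by apply/negP; lia.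
case: ifP => _; last exact: MI_Xv2.
rewrite sqr_sum_F2; apply: MI_sum => j _; apply: MI_Xv2; nia.
Qed.

Lemma K_all p : K n.-1 p.
Proof. by move=> nu i h; have := ltkA i; lia. Qed.

Local Notation kc := (kC n).
Local Notation C := (TT (kC n)).

Lemma psi_X (i : 'I_kc) : psi 'X_i = if (i < nn)%N then Xv k i else rhoA n.
Proof.
rewrite /psi /psi_images compX_tuple; case: ifP => // _.
by rewrite hAE -divn_eq.
Qed.

Lemma psi_Xv j : (j < nn)%N -> psi (Xv kc j) = Xv k j.
Proof.
move=> hj; have hk : (j < kc)%N by rewrite /kC; lia.
by rewrite (Xv_ord hk) psi_X /= hj.
Qed.

Lemma psi_rhoC : psi (rhoC n) = rhoA n.
Proof.
have hk : (nn < kc)%N by rewrite /kC.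
by rewrite /rhoC (Xv_ord hk) psi_X /= ltnn.
Qed.

Lemma psiD (c d : C) : psi (c + d) = psi c + psi d. Proof. exact: raddfD. Qed.
Lemma psiB (c d : C) : psi (c - d) = psi c - psi d. Proof. exact: raddfB. Qed.
Lemma psiM (c d : C) : psi (c * d) = psi c * psi d. Proof. exact: rmorphM. Qed.
Lemma psiZ a (c : C) : psi (a *: c) = a *: psi c. Proof. exact: compZ. Qed.
Lemma psi1 : psi (1 : C) = 1. Proof. exact: rmorph1. Qed.
Lemma psi0 : psi (0 : C) = 0. Proof. exact: raddf0. Qed.
Lemma psiXn (c : C) e : psi (c ^+ e) = psi c ^+ e. Proof. exact: rmorphXn. Qed.
Lemma psi_sum (I : Type) (r : seq I) (Q : pred I) (G : I -> C) :
  psi (\sum_(i <- r | Q i) G i) = \sum_(i <- r | Q i) psi (G i).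
Proof. exact: raddf_sum. Qed.

Lemma dA_psi (c : C) : dA (psi c) = 0.
Proof.
apply: (@vanish _ _ (fun c : C => dA (psi c)) (@psi n) (@psi n) predT).
- by move=> x y; rewrite psiD dAD.
- by move=> a x; rewrite psiZ dAZ.
- by move=> x y; rewrite psiM dAM.
- by rewrite psi1 dA1.
- move=> i _; rewrite psi_X; case: ifP => h; last exact: dA_rho.
  by rewrite dA_small.
- by [].
Qed.

Definition eps_f (i : nat) : C :=
  if i == 0%N then Xv kc n.-1 else if (i < n)%N then Xv kc i.-1 + Xv kc i
  else if (i <= nn)%N then Xv kc i else 0.
Definition eps (p : T) : C := p \mPo [tuple eps_f i | i < k].

Lemma epsX (i : 'I_k) : eps 'X_i = eps_f i. Proof. exact: compX_tuple. Qed.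
Lemma epsD (p q : T) : eps (p + q) = eps p + eps q. Proof. exact: raddfD. Qed.
Lemma epsM (p q : T) : eps (p * q) = eps p * eps q. Proof. exact: rmorphM. Qed.
Lemma epsZ a (p : T) : eps (a *: p) = a *: eps p. Proof. exact: compZ. Qed.
Lemma eps1 : eps 1 = 1. Proof. exact: rmorph1. Qed.

Lemma psi_eps_X (i : 'I_k) : (i <= nn)%N -> psi (eps_f i) = sig_f i.
Proof.
move=> hi; rewrite /eps_f /sig_f.
case: ((i : nat) == 0%N); first by rewrite psi_Xv //; nia.
case: ifP => h1; first by rewrite psiD !psi_Xv //; nia.
rewrite hi; case: ifP => h2; first by rewrite (eqP h2); exact: psi_rhoC.
rewrite psi_Xv //; have : (i : nat) <> nn by move=> E; move: h2; rewrite E eqxx.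
lia.
Qed.

Lemma sig_eps p : K 0 p -> sig p = psi (eps p).
Proof.
move=> hp; apply/eqP; rewrite eq_sym -subr_eq0; apply/eqP.
apply: (@vanish _ _ (fun p : T => psi (eps p) - sig p) (fun p : T => psi (eps p)) sig
  (fun i : 'I_k => (i <= nn)%N)).
- by move=> x y; rewrite epsD psiD sigD opprD addrACA.
- by move=> a x; rewrite epsZ psiZ sigZ scalerBr.
- by move=> x y; rewrite epsM psiM sigM mulrBl mulrBr addrA subrK.
- by rewrite eps1 psi1 sig1 subrr.
- by move=> i hi; rewrite epsX sigX psi_eps_X // subrr.
- move=> m i hm hi; apply/eqP; apply/negPn/negP => hmi; move: hm.
  by rewrite (hp m i) ?eqxx //; rewrite addn0; lia.
Qed.

Lemma part3 (a : T) : cycleA a -> exists c : C, boundaryA (a - psi c).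
Proof.
move=> ha.
have ca : MI PIA (dB (tau a)).
  apply/inIA_MI; rewrite -[dB (tau a)]tau_sig sig_dB sig_tau.
  exact: tau_IA.
have hn1 : (n.-1 < n)%N by lia.
have [r [b [Kr Kb Mab]]] := homol hn1 (K_all (tau a)) ca.
exists (eps r), (sig b).
have -> : a - psi (eps r) - dA (sig b) = sig (tau a - r - dB b).
  by rewrite !sigB sig_tau sig_dB (sig_eps Kr).
by apply: sig_IA; apply/inIA_MI.
Qed.

Definition phi_f (i : nat) : C :=
  if (i < nn)%N then Xv kc i else if i == nn then rhoC n else 0.
Definition phi (p : T) : C := p \mPo [tuple phi_f i | i < k].

Lemma phiX (i : 'I_k) : phi 'X_i = phi_f i. Proof. exact: compX_tuple. Qed.
Lemma phiXv j : (j < k)%N -> phi (Xv k j) = phi_f j.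
Proof. by move=> h; rewrite (Xv_ord h) phiX. Qed.
Lemma phiD (p q : T) : phi (p + q) = phi p + phi q. Proof. exact: raddfD. Qed.
Lemma phiM (p q : T) : phi (p * q) = phi p * phi q. Proof. exact: rmorphM. Qed.
Lemma phiZ a (p : T) : phi (a *: p) = a *: phi p. Proof. exact: compZ. Qed.
Lemma phi1 : phi 1 = 1. Proof. exact: rmorph1. Qed.
Lemma phiXn (p : T) e : phi (p ^+ e) = phi p ^+ e. Proof. exact: rmorphXn. Qed.
Lemma phi_sum (I : Type) (r : seq I) (Q : pred I) (G : I -> T) :
  phi (\sum_(i <- r | Q i) G i) = \sum_(i <- r | Q i) phi (G i).
Proof. exact: raddf_sum. Qed.

Lemma phi_rho : phi (rhoA n) = rhoC n.
Proof.
rewrite rho_split phiD phi_sum phiXv; last by rewrite kAE; nia.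
rewrite /phi_f ltnn eqxx big1 ?addr0 // => j hj; have := z_ne0 hj => hj0.
rewrite phiXv; last by rewrite kAE; have := ltn_ord j; lia.
rewrite /phi_f ifF; last by apply/negP; lia.
by rewrite ifF //; apply/negP => /eqP; lia.
Qed.

Lemma phi_psi (c : C) : phi (psi c) = c.
Proof.
apply/eqP; rewrite -subr_eq0; apply/eqP.
apply: (@vanish _ _ (fun c : C => phi (psi c) - c) (fun c : C => phi (psi c)) id predT).
- by move=> x y; rewrite psiD phiD opprD addrACA.
- by move=> a x; rewrite psiZ phiZ scalerBr.
- by move=> x y; rewrite psiM phiM mulrBl mulrBr addrA subrK.
- by rewrite psi1 phi1 subrr.
- move=> i _; rewrite psi_X; case: ifP => h.
    rewrite phiXv; last by rewrite kAE; lia.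
    by rewrite /phi_f h XvE subrr.
  have hi : (i : nat) = nn.
    by move: (ltn_ord i) h; rewrite /kC ltnS leq_eqVlt => /orP [/eqP //|->].
  by rewrite phi_rho /rhoC -hi XvE subrr.
- by [].
Qed.

Lemma JC_mem (g : C) : g \in JC_gens n -> inJC g.
Proof. exact: in_ideal_gen. Qed.

Lemma jc_gen3 j : (j < n)%N -> inJC (Xv kc j ^+ 2 - Xv kc n.-1 ^+ 2).
Proof.
move=> hj; apply: JC_mem; rewrite /JC_gens !mem_cat; apply/orP; right; apply/orP; right.
apply: (@map_f _ _ (fun j => hC n 0 j ^+ 2 - hC n 0 n.-1 ^+ 2)).
by rewrite mem_iota.
Qed.

Lemma phi_gen t : (n <= t)%N -> (t < k)%N -> inJC (phi (Xv k t ^+ 2)).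
Proof.
move=> h1 h2; rewrite phiXn phiXv // /phi_f.
case: ifP => h3.
  apply: JC_mem; rewrite /JC_gens mem_cat; apply/orP; left.
  have -> : Xv kc t = hC n (t %/ n) (t %% n) by rewrite /hC -divn_eq.
  apply: allpairs_f; rewrite mem_iota.
    apply/andP; split; first by rewrite divn_gt0 //; lia.
    by rewrite add1n prednK // ltn_divLR //; lia.
  by rewrite add0n ltn_mod; lia.
case: ifP => h4; last by rewrite expr0n; apply: in_ideal0.
apply: JC_mem; rewrite /JC_gens !mem_cat; apply/orP; right; apply/orP; left.
by rewrite mem_seq1.
Qed.

Lemma phi_IA (x : T) : inIA x -> inJC (phi x).
Proof.
move=> /in_idealP [c ->]; rewrite phi_sum; apply: in_ideal_sum => i _.
rewrite phiM; apply: in_idealM.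
have : (IA_gens n)`_i \in IA_gens n by apply: mem_nth.
case/allpairsP => [[o j] /= [ho hj ->]].
move: ho hj; rewrite !mem_iota => /andP [ho1 ho2] /andP [_ hj].
rewrite hAE; apply: phi_gen; rewrite ?kAE; nia.
Qed.

Lemma phi_dAF (i : 'I_k) : inJC (phi (dAF i)).
Proof.
rewrite /dAF !hA0 phiD !phiXn.
have ha : (((i - nn + n).-1 %% n) < n)%N by rewrite ltn_mod; lia.
have hl : (i - nn < n)%N by have := ltkA i; lia.
have hnk : (n <= k)%N by rewrite kAE; nia.
have ha' : (((i - nn + n).-1 %% n) < k)%N by apply: (leq_trans ha).
have hl' : (i - nn < k)%N by apply: (leq_trans hl).
have ha2 : (((i - nn + n).-1 %% n) < nn)%N by nia.
have hl2 : (i - nn < nn)%N by nia.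
rewrite (phiXv ha') (phiXv hl') /phi_f ha2 hl2.
set A := Xv kc _ ^+ 2; set B := Xv kc (i - nn) ^+ 2.
have -> : A + B = (A - Xv kc n.-1 ^+ 2) + (B - Xv kc n.-1 ^+ 2).
  by rewrite !subF2 addrACA addpp addr0.
by apply: in_idealD; apply: jc_gen3.
Qed.

Lemma phi_dA (b : T) : inJC (phi (dA b)).
Proof.
rewrite dA_der /der phi_sum; apply: in_ideal_sum => i _.
by rewrite phiM; apply: in_idealM; apply: phi_dAF.
Qed.

Lemma part4 (c : C) : boundaryA (psi c) -> inJC c.
Proof.
move=> [b hb]; rewrite -(phi_psi c).
have -> : psi c = (psi c - dA b) + dA b by rewrite subrK.
by rewrite phiD; apply: in_idealD; [apply: phi_IA | apply: phi_dA].
Qed.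

Lemma bnd0 : boundaryA (0 : T).
Proof. by exists 0; rewrite dA_der der0 subr0; apply: in_ideal0. Qed.

Lemma bndD (x y : T) : boundaryA x -> boundaryA y -> boundaryA (x + y).
Proof.
move=> [b1 h1] [b2 h2]; exists (b1 + b2).
have -> : x + y - dA (b1 + b2) = (x - dA b1) + (y - dA b2) by rewrite dAD opprD addrACA.
exact: in_idealD.
Qed.

Lemma bndM (x y : T) : dA x = 0 -> boundaryA y -> boundaryA (x * y).
Proof.
move=> hx [b hb]; exists (x * b).
have -> : x * y - dA (x * b) = x * (y - dA b) by rewrite dAM hx mul0r add0r mulrBr.
exact: in_idealM.
Qed.

Lemma bndIA (x : T) : inIA x -> boundaryA x.
Proof. by move=> h; exists 0; rewrite dA_der der0 subr0. Qed.

Lemma psi_gen (g : C) : g \in JC_gens n -> boundaryA (psi g).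
Proof.
rewrite /JC_gens !mem_cat => /orP [hA|/orP [hR|hB]].
- case/allpairsP: hA => [[o j] /= [ho hj ->]].
  move: ho hj; rewrite !mem_iota => /andP [ho1 ho2] /andP [_ hj].
  rewrite psiXn /hC psi_Xv; last by nia.
  by apply: bndIA; apply/inIA_MI; apply: MI_Xv2; nia.
- move: hR; rewrite mem_seq1 => /eqP ->.
  rewrite psiXn psi_rhoC rhoAE sqr_sum_F2; apply: bndIA; apply/inIA_MI.
  by apply: MI_sum => j _; apply: MI_Xv2; nia.
- case/mapP: hB => j; rewrite mem_iota => /andP [_ hj] ->.
  rewrite psiB !psiXn /hC !mul0n !add0n !psi_Xv; try nia.
  exists (\sum_(j.+1 <= l < n) Xv k (nn + l)).
  rewrite dA_sum (eq_big_nat _ _ (F2 := fun l => Xv k l.-1 ^+ 2 + Xv k l ^+ 2)); last first.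
    by move=> l hl; rewrite dA_z1 //; apply/andP; split; lia.
  rewrite (telescope (fun t => Xv k t ^+ 2)) // !subF2 addpp.
  exact: in_ideal0.
Qed.

Lemma part2 (c : C) : inJC c -> boundaryA (psi c).
Proof.
move=> /in_idealP [c' ->]; rewrite psi_sum.
apply: (big_ind (fun x : T => boundaryA x)); [exact: bnd0 | exact: bndD |].
move=> i _; rewrite psiM; apply: bndM; first exact: dA_psi.
by apply: psi_gen; apply: mem_nth.
Qed.

End Main.

Unset Implicit Arguments.

Theorem lemma5p2 (n : nat) (hn : (1 <= n)%N) :
  (forall c : F2poly (kC n), cycleA (psi c)) /\
  (forall c : F2poly (kC n), inJC c -> boundaryA (psi c)) /\
  (forall a : F2poly (kA n), cycleA a ->
     exists c : F2poly (kC n), boundaryA (a - psi c)) /\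
  (forall c : F2poly (kC n), boundaryA (psi c) -> inJC c).
Proof.
split; [|split; [|split]].
- by move=> c; rewrite /cycleA (dA_psi hn); apply: in_ideal0.
- by move=> c; apply: (part2 hn).
- by move=> a; apply: (part3 hn).
- by move=> c; apply: (part4 hn).
Qed.
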